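(* There exists a deal and a legal game that is a tranca mínima (as defined in the context) in which the winning team obtains $107$ points.
   Context: Domino tiles: the set of tiles consists of the 28 unordered pairs $[a,b]=[b,a]$ with $a,b\in\{0,1,\dots,6\}$; the number of points (pips) of $[a,b]$ is $a+b$. Four players, numbered 1 to 4, play; players 1 and 3 form one team and players 2 and 4 the other. The 28 tiles are dealt, 7 to each player (the initial hands). Players take turns in cyclic order $1,2,3,4,1,\dots$. The starting player places any one of their tiles on the table, forming a line of tiles (the board) with two open ends. On each subsequent turn, the player whose turn it is must, if they hold a tile containing a number equal to the number shown at one of the two open ends, place such a tile at that end (with equal numbers adjacent), the other number of the tile becoming the new open end; if they hold no such tile, they pass. A game ends either when a player places their last tile, or in a tranca (blocked game): a position in which no player holds a tile that can be placed. In a game ending in a tranca, the team whose two players' remaining tiles have the smaller total number of pips wins, and it obtains as points the total number of pips on the tiles remaining in the hands of the two players of the other (losing) team. A tranca mínima is a game ending in a tranca in which the total number of pips on the tiles of the board at the end of the game is $42$. *)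

(* Defs.v *)
From mathcomp Require Import all_boot.
Set Implicit Arguments. Unset Strict Implicit. Unset Printing Implicit Defensive.

(* A tile [a,b] is represented by the normalized pair (a,b) with a <= b <= 6. *)
Definition tile := (nat * nat)%type.

Definition all_tiles : seq tile :=
  [seq (a, b) | a <- iota 0 7, b <- iota a (7 - a)].

Definition pips (t : tile) : nat := t.1 + t.2.
Definition pips_seq (s : seq tile) : nat := sumn (map pips s).

(* Players 1..4 are represented by 'I_4 (player k+1 <-> index k);
   team of players 1,3 is team 0, team of players 2,4 is team 1. *)
Definition team (i : 'I_4) : nat := i %% 2.

Definition hands := 'I_4 -> seq tile.

Definition valid_deal (h : hands) : Prop :=
  (forall i, size (h i) = 7) /\
  perm_eq (flatten [seq h i | i <- enum 'I_4]) all_tiles.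

(* Game state after the first tile has been placed. *)
Record state := State {
  st_hands : hands;
  st_left  : nat;
  st_right : nat;
  st_board : seq tile }.

Definition has_num (t : tile) (x : nat) : bool := (t.1 == x) || (t.2 == x).
Definition other_num (t : tile) (x : nat) : nat := if t.1 == x then t.2 else t.1.

Definition fits (s : state) (t : tile) : bool :=
  has_num t (st_left s) || has_num t (st_right s).

Definition can_play (s : state) (i : 'I_4) : bool := has (fits s) (st_hands s i).

Definition blocked (s : state) : Prop := forall i, ~~ can_play s i.

Definition all_nonempty (s : state) : Prop := forall i, st_hands s i != [::].

Definition remove_tile (h : hands) (i : 'I_4) (t : tile) : hands :=
  fun j => if j == i then rem t (h i) else h j.

Inductive move := Pass | PlayLeft of tile | PlayRight of tile.

Definition legal_move (i : 'I_4) (s : state) (m : move) (s' : state) : Prop :=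
  match m with
  | Pass => ~~ can_play s i /\ s' = s
  | PlayLeft t =>
      t \in st_hands s i /\ has_num t (st_left s) /\
      s' = State (remove_tile (st_hands s) i t)
                 (other_num t (st_left s)) (st_right s) (t :: st_board s)
  | PlayRight t =>
      t \in st_hands s i /\ has_num t (st_right s) /\
      s' = State (remove_tile (st_hands s) i t)
                 (st_left s) (other_num t (st_right s)) (rcons (st_board s) t)
  end.

Definition player_of (n : nat) : 'I_4 := Ordinal (ltn_pmod n (isT : 0 < 4)).

(* [play_to_tranca n s ms sf]: starting at turn n (player n mod 4) in state s,
   the moves ms are played legally, the game does not end before they are all
   played (no hand becomes empty, no tranca position is reached earlier), and
   the final state sf is a tranca in which no player has emptied his hand. *)
Fixpoint play_to_tranca (n : nat) (s : state) (ms : seq move) (sf : state) : Prop :=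
  match ms with
  | [::] => s = sf /\ blocked s /\ all_nonempty s
  | m :: ms' => all_nonempty s /\ ~ blocked s /\
      exists s', legal_move (player_of n) s m s' /\ play_to_tranca n.+1 s' ms' sf
  end.

Definition tranca_game (h : hands) (t0 : tile) (ms : seq move) (sf : state) : Prop :=
  valid_deal h /\ t0 \in h ord0 /\
  play_to_tranca 1 (State (remove_tile h ord0 t0) t0.1 t0.2 [:: t0]) ms sf.

Definition team_pips (s : state) (k : nat) : nat :=
  \sum_(i < 4 | team i == k) pips_seq (st_hands s i).

Definition tranca_minima (sf : state) : Prop := pips_seq (st_board sf) = 42.

Definition team_wins_with (sf : state) (k pts : nat) : Prop :=
  k < 2 /\ team_pips sf k < team_pips sf (1 - k) /\ pts = team_pips sf (1 - k).

(* Main.v *)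
Require Import Defs.
From mathcomp Require Import all_boot.

Definition ords4 : seq 'I_4 :=
  [:: @Ordinal 4 0 isT; @Ordinal 4 1 isT; @Ordinal 4 2 isT; @Ordinal 4 3 isT].
Lemma mem_ords4 (i : 'I_4) : i \in ords4.
Proof. by case: i => [[|[|[|[|m]]]] Hm]. Qed.
Definition blockedb (s : state) : bool := all (fun i => ~~ can_play s i) ords4.
Definition nonemptyb (s : state) : bool := all (fun i => st_hands s i != [::]) ords4.

Definition legalb (i : 'I_4) (s : state) (m : move) : bool :=
  match m with
  | Pass => ~~ can_play s i
  | PlayLeft t => (t \in st_hands s i) && has_num t (st_left s)
  | PlayRight t => (t \in st_hands s i) && has_num t (st_right s)
  end.

Definition next (i : 'I_4) (s : state) (m : move) : state :=
  match m with
  | Pass => s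
  | PlayLeft t => State (remove_tile (st_hands s) i t)
                 (other_num t (st_left s)) (st_right s) (t :: st_board s)
  | PlayRight t => State (remove_tile (st_hands s) i t)
                 (st_left s) (other_num t (st_right s)) (rcons (st_board s) t)
  end.

Fixpoint checkb (n : nat) (s : state) (ms : seq move) : bool :=
  match ms with
  | [::] => blockedb s && nonemptyb s
  | m :: ms' => [&& nonemptyb s, ~~ blockedb s, legalb (player_of n) s m &
                 checkb n.+1 (next (player_of n) s m) ms']
  end.

Fixpoint run (n : nat) (s : state) (ms : seq move) : state :=
  match ms with
  | [::] => s
  | m :: ms' => run n.+1 (next (player_of n) s m) ms'
  end.

Lemma blockedbP s : blockedb s -> blocked s.
Proof. by move/allP=> H i; apply: H; exact: mem_ords4. Qed.

Lemma nonemptybP s : nonemptyb s -> all_nonempty s.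
Proof. by move/allP=> H i; apply: H; exact: mem_ords4. Qed.

Lemma notblockedP s : ~~ blockedb s -> ~ blocked s.
Proof. by move=> nb H; move/negP: nb; apply; apply/allP => i _; exact: H. Qed.

Lemma legalbP i s m : legalb i s m -> legal_move i s m (next i s m).
Proof.
by case: m => [|t|t] /=; [move=> ->|case/andP=> -> ->|case/andP=> -> ->].
Qed.

Lemma checkbP n s ms : checkb n s ms -> play_to_tranca n s ms (run n s ms).
Proof.
elim: ms n s => [|m ms IH] n s /=.
  by case/andP=> /blockedbP ? /nonemptybP ?.
case/and4P=> /nonemptybP ? /notblockedP ? /legalbP ? /IH ?.
by split=> //; split=> //; exists (next (player_of n) s m).
Qed.

Definition tp (s : state) (k : nat) : nat :=
  sumn [seq (if team i == k then pips_seq (st_hands s i) else 0) | i <- ords4].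

Lemma sum4 (f : 'I_4 -> nat) : \sum_(i < 4) f i = sumn (map f ords4).
Proof.
rewrite !big_ord_recr big_ord0 /= !addnA add0n addn0.
by congr (_ + _ + _ + _); congr f; apply: val_inj.
Qed.

Lemma team_pipsE s k : team_pips s k = tp s k.
Proof. by rewrite /team_pips big_mkcond sum4. Qed.

Definition H0 : seq (seq tile) :=
  [:: [:: (0,0); (0,6); (1,3); (0,4); (0,2); (1,4); (2,3)];
      [:: (5,6); (6,6); (5,5); (2,6); (1,6); (2,5); (1,5)];
      [:: (0,1); (0,5); (0,3); (2,4); (2,2); (1,2); (1,1)];
      [:: (4,6); (3,6); (4,5); (3,5); (4,4); (3,4); (3,3)]].

Definition h0 : hands := fun i => nth [::] H0 i.
Definition t00 : tile := (0,0).
Definition ms0 : seq move :=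
  [:: Pass; PlayLeft (0,1); Pass; PlayRight (0,6); PlayRight (5,6); PlayRight (0,5);
      Pass; PlayLeft (1,3); Pass; PlayLeft (0,3); Pass; PlayLeft (0,4); Pass;
      PlayLeft (2,4); Pass; PlayLeft (0,2)].
Definition s0 : state := State (remove_tile h0 ord0 t00) t00.1 t00.2 [:: t00].
Definition sf0 : state := run 1 s0 ms0.

Theorem mainTheorem8 :
  exists (h : hands) (t0 : tile) (ms : seq move) (sf : state),
    tranca_game h t0 ms sf /\ tranca_minima sf /\
    exists k, team_wins_with sf k 107.
Proof.
exists h0, t00, ms0, sf0.
split; [split; [|split]|split].
- split; first by case=> [[|[|[|[|?]]]] ?].
  have -> : enum 'I_4 = ords4.
    by apply: (inj_map val_inj); rewrite val_enum_ord.
  by vm_compute.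
- by vm_compute.
- apply: checkbP; by vm_compute.
- by vm_compute.
- exists 0; split; first by [].
  rewrite !team_pipsE; by vm_compute.
Qed.
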